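(* Fix $\mathbf a=(a_\alpha)_{\alpha\in R^+}\in\mathbb Z_{\ge0}^{n(n-1)/2}$. Then the set $\{\overline{\mathbf f^{\mathbf s}}:\mathbf s\in S(\mathbf a)\}$ of images of the monomials $\mathbf f^{\mathbf s}$ spans $S(\mathfrak n^-)/\mathcal I(\mathbf a)$.
   Context: Let $\mathfrak{sl}_n=\mathfrak n^+\oplus\mathfrak h\oplus\mathfrak n^-$ with simple roots $\alpha_1,\dots,\alpha_{n-1}$ and positive roots $R^+=\{\alpha_{k,\ell}=\alpha_k+\dots+\alpha_\ell:1\le k\le\ell\le n-1\}$; $f_\alpha\in\mathfrak g_{-\alpha}$, $e_\alpha\in\mathfrak g_\alpha$ are root vectors. $S(\mathfrak n^-)$ is the symmetric algebra (polynomial ring) of $\mathfrak n^-$, identified with the associated graded algebra of $U(\mathfrak n^-)$ for the PBW filtration. $\mathfrak n^+$ acts on $\mathfrak n^-\cong\mathfrak{sl}_n/(\mathfrak n^+\oplus\mathfrak h)$ via the adjoint action (so $e_\alpha\circ f_\beta$ is a multiple of $f_{\beta-\alpha}$ if $\beta-\alpha\in R^+$ and $0$ otherwise), and this action is extended to $S(\mathfrak n^-)$ by derivations; denote it by $\circ$. For $\mathbf a=(a_\alpha)$, $\mathcal I(\mathbf a)\subset S(\mathfrak n^-)$ is the ideal generated by $\sum_{\alpha\in R^+}U(\mathfrak n^+)\circ f_\alpha^{a_\alpha+1}$. A Dyck path is a sequence $\mathbf p=(\beta_1,\dots,\beta_s)$, $s\ge1$, of positive roots such that if $\beta_i=\alpha_{k,\ell}$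 then $\beta_{i+1}\in\{\alpha_{k+1,\ell},\alpha_{k,\ell+1}\}$; if $\beta_1=\alpha_{k_1,\ell_1}$ and $\beta_s=\alpha_{k_s,\ell_s}$, its base root is $\beta(\mathbf p)=\alpha_{k_1,\ell_s}$. Let $\mathcal P(\mathbf a)=\{(x_\alpha)\in\mathbb R^{n(n-1)/2}:\sum_{\alpha\in\mathbf p}x_\alpha\le a_{\beta(\mathbf p)}\text{ for all Dyck paths }\mathbf p\}$ and $S(\mathbf a)=\mathcal P(\mathbf a)\cap\mathbb Z_{\ge0}^{n(n-1)/2}$. For $\mathbf t=(t_\alpha)\in\mathbb Z_{\ge0}^{n(n-1)/2}$, $\mathbf f^{\mathbf t}=\prod_{\alpha\in R^+}f_\alpha^{t_\alpha}\in S(\mathfrak n^-)$. *)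

(* Defs.v *)
From HB Require Import structures.
From mathcomp Require Import all_boot all_order all_algebra.
From mathcomp Require Import mpoly.
Set Implicit Arguments. Unset Strict Implicit. Unset Printing Implicit Defensive.
Import GRing.Theory.
Local Open Scope ring_scope.

(* The pair (i,j) of 0-based indices i < j < n
   stands for eps_i - eps_j, i.e. alpha_{k,l} with k = i+1, l = j
   (1-based, 1 <= k <= l <= n-1).  f_(i,j) = E_{j,i}, e_(i,j) = E_{i,j}. *)
Definition posroot (n : nat) := {p : 'I_n * 'I_n | (p.1 < p.2)%N}.

Definition nroots (n : nat) := #|{: posroot n}|.

(* index of the variable f_alpha in S(n^-) = F[f_alpha : alpha in R^+] *)
Definition ridx (n : nat) (a : posroot n) : 'I_(nroots n) := enum_rank a.

Definition rlo n (a : posroot n) : nat := (val a).1.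
Definition rhi n (a : posroot n) : nat := (val a).2.

Notation Sn F n := {mpoly F[nroots n]}.

Definition fvar (F : fieldType) n (a : posroot n) : Sn F n := 'X_(ridx a).

(* e_alpha o f_beta : adjoint action on n^- = sl_n / (n^+ + h).
   With e = E_{i,j}, f = E_{q,p} (alpha=(i,j), beta=(p,q)):
   [E_{ij}, E_{qp}] = delta_{jq} E_{ip} - delta_{pi} E_{qj};
   projecting onto n^- keeps the strictly lower-triangular entries. *)
Definition ef_act (F : fieldType) n (a b : posroot n) : Sn F n :=
  \sum_(c : posroot n)
     ((if (rhi a == rhi b) && (rlo c == rlo b) && (rhi c == rlo a)
       then fvar F c else 0)
    - (if (rlo b == rlo a) && (rlo c == rhi a) && (rhi c == rhi b)
       then fvar F c else 0)).

(* e_alpha acting on S(n^-) by derivations *)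
Definition eact (F : fieldType) n (a : posroot n) (P : Sn F n) : Sn F n :=
  \sum_(b : posroot n) mderiv (ridx b) P * ef_act F a b.

(* action of the PBW-type word e_{a_1} ... e_{a_r} in U(n^+) *)
Definition wact (F : fieldType) n (w : seq (posroot n)) (P : Sn F n) : Sn F n :=
  foldr (@eact F n) P w.

(* I(a): the ideal generated by sum_alpha U(n^+) o f_alpha^(a_alpha + 1).
   Since the e_alpha generate U(n^+) as an algebra, U(n^+) o g is spanned by
   the w o g for words w; the ideal generated is the set of finite sums
   sum_k c_k * (w_k o f_{alpha_k}^(a_{alpha_k}+1)) with c_k in S(n^-). *)
Definition in_Ia (F : fieldType) n (a : posroot n -> nat) (P : Sn F n) : Prop :=
  exists l : seq (Sn F n * seq (posroot n) * posroot n),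
    P = \sum_(x <- l) x.1.1 * wact x.1.2 (fvar F x.2 ^+ (a x.2).+1).

Definition dyck_step n (b c : posroot n) : bool :=
  ((rlo c == (rlo b).+1) && (rhi c == rhi b)) ||
  ((rlo c == rlo b) && (rhi c == (rhi b).+1)).

Definition dyck_path n (p : seq (posroot n)) : bool :=
  if p is b :: p' then path (@dyck_step n) b p' else false.

(* base root of a Dyck path: alpha_{k_1, l_s}; returns None only if the
   pair is not a positive root (impossible for Dyck paths). *)
Definition base_root n (b : posroot n) (p : seq (posroot n)) : option (posroot n) :=
  [pick c : posroot n | (rlo c == rlo b) && (rhi c == rhi (last b p))].

(* S(a) = P(a) ∩ Z_{>=0}^{R^+}: integer points satisfying all Dyck path
   inequalities *)
Definition in_Sa n (a : posroot n -> nat) (t : posroot n -> nat) : Prop :=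
  forall (b : posroot n) (p : seq (posroot n)) (c : posroot n),
    dyck_path (b :: p) -> base_root b p = Some c ->
    (\sum_(x <- b :: p) t x <= a c)%N.

Definition fmon (F : fieldType) n (t : posroot n -> nat) : Sn F n :=
  \prod_(c : posroot n) fvar F c ^+ t c.

(* Main.v *)
Require Import Defs.
From HB Require Import structures.
From mathcomp Require Import all_boot all_order all_algebra.
From mathcomp Require Import mpoly.
From mathcomp Require Import zify ring.
From Stdlib Require Import Classical.
Set Implicit Arguments. Unset Strict Implicit. Unset Printing Implicit Defensive.
Import GRing.Theory.
Local Open Scope ring_scope.

Lemma root_eq n (x y : posroot n) : rlo x = rlo y -> rhi x = rhi y -> x = y.
Proof.
case: x y => [[x1 x2] hx] [[y1 y2] hy]; rewrite /rlo /rhi /= => e1 e2.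
apply/val_inj => /=; congr pair; exact/val_inj.
Qed.

Lemma root_lt n (x : posroot n) : (rlo x < rhi x)%N.
Proof. by case: x => [[x1 x2] hx]. Qed.

Lemma root_hi n (x : posroot n) : (rhi x < n)%N.
Proof. by case: x => [[x1 x2] hx]; rewrite /rhi /=. Qed.

Definition mkr n (i j : nat) : option (posroot n) :=
  [pick c : posroot n | (rlo c == i) && (rhi c == j)].

Lemma mkr_Some n i j (u : posroot n) : mkr n i j = Some u -> rlo u = i /\ rhi u = j.
Proof.
rewrite /mkr; case: pickP => // x /andP[/eqP h1 /eqP h2] [<-]; by [].
Qed.

Lemma mkr_self n (q : posroot n) : mkr n (rlo q) (rhi q) = Some q.
Proof.
rewrite /mkr; case: pickP => [x /andP[/eqP h1 /eqP h2]|].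
  by congr Some; apply: root_eq.
by move/(_ q); rewrite !eqxx.
Qed.

Lemma mkr_ex n i j : (i < j)%N -> (j < n)%N -> exists u, mkr n i j = Some u.
Proof.
move=> hij hjn.
have hin : (i < n)%N by apply: ltn_trans hjn.
pose q : posroot n := exist _ (Ordinal hin, Ordinal hjn) hij.
have -> : i = rlo q by [].
have -> : j = rhi q by [].
by exists q; apply: mkr_self.
Qed.

Lemma mkr_None n i j : (j <= i)%N -> mkr n i j = None.
Proof.
move=> h; rewrite /mkr; case: pickP => // x /andP[/eqP h1 /eqP h2].
by have := root_lt x; rewrite h1 h2 ltnNge h.
Qed.

Definition oF (F : fieldType) n (o : option (posroot n)) : Sn F n :=
  if o is Some u then fvar F u else 0.

Lemma sum_pick (F : fieldType) n (b : bool) i j :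
  \sum_(c : posroot n) (if (b && (rlo c == i)) && (rhi c == j) then fvar F c else 0)
  = if b then oF F (mkr n i j) else 0.
Proof.
case: b => /=; last by rewrite big1.
case E: (mkr n i j) => [u|] /=.
  have [h1 h2] := mkr_Some E.
  rewrite (bigD1 u) //.
  rewrite h1 h2 !eqxx /= big1 ?addr0 // => c /negbTE hc.
  case: ifP => // /andP[/eqP e1 /eqP e2].
  by move: hc; rewrite (root_eq (x:=c) (y:=u)) ?eqxx // ?e1 ?e2.
rewrite big1 // => c _; case: ifP => // /andP[/eqP e1 /eqP e2].
by move: E; rewrite -e1 -e2 mkr_self.
Qed.



Lemma eactD (F : fieldType) n (a : posroot n) (P Q : Sn F n) :
  eact a (P + Q) = eact a P + eact a Q.
Proof. by rewrite /eact -big_split; apply: eq_bigr => b _; rewrite mderivD mulrDl. Qed.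

Lemma eact0 (F : fieldType) n (a : posroot n) : eact a (0 : Sn F n) = 0.
Proof. by rewrite /eact big1 // => b _; rewrite mderiv0 mul0r. Qed.

Lemma eactZ (F : fieldType) n (a : posroot n) k (P : Sn F n) :
  eact a (k *: P) = k *: eact a P.
Proof.
by rewrite /eact scaler_sumr; apply: eq_bigr => b _; rewrite mderivZ scalerAl.
Qed.

Lemma eact_sum (F : fieldType) n (a : posroot n) I (r : seq I) (G : I -> Sn F n) :
  eact a (\sum_(i <- r) G i) = \sum_(i <- r) eact a (G i).
Proof. exact: (big_morph _ (@eactD F n a) (@eact0 F n a)). Qed.

Lemma eactM (F : fieldType) n (a : posroot n) (P Q : Sn F n) :
  eact a (P * Q) = eact a P * Q + P * eact a Q.
Proof.
rewrite /eact mulr_suml mulr_sumr -big_split; apply: eq_bigr => b _.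
rewrite mderivM mulrDl /=; congr (_ + _); [exact: mulrAC | exact: esym (mulrA _ _ _)].
Qed.

Lemma eact1 (F : fieldType) n (a : posroot n) : eact a (1 : Sn F n) = 0.
Proof.
rewrite /eact big1 // => b _; rewrite -mpolyX0 mderivX mnm0E scale0r mul0r //.
Qed.

Lemma eact_fvar (F : fieldType) n (a v : posroot n) :
  eact a (fvar F v) = ef_act F a v.
Proof.
rewrite /eact (bigD1 v) //= big1 ?addr0.
  rewrite /fvar mderivX mnm1E eqxx.
  have -> : (U_(ridx v) - U_(ridx v) = 0)%MM by apply/mnmP => i; rewrite mnmBE mnm0E subnn.
  by rewrite mpolyX0 scale1r mul1r.
move=> b hb; rewrite /fvar mderivX mnm1E.
by rewrite (inj_eq (@enum_rank_inj _)) eq_sym (negbTE hb) scale0r mul0r.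
Qed.


Lemma ef_actE (F : fieldType) n (a v : posroot n) :
  ef_act F a v = (if rhi a == rhi v then oF F (mkr n (rlo v) (rlo a)) else 0)
               - (if rlo v == rlo a then oF F (mkr n (rhi a) (rhi v)) else 0).
Proof. by rewrite /ef_act sumrB !sum_pick. Qed.

Definition dd n (l0 h1 : nat) (a v : posroot n) : option (posroot n) :=
  if rlo a == l0 then (if rlo v == l0 then mkr n (rhi a) (rhi v) else None)
  else (if rhi v == h1 then mkr n (rlo v) (rlo a) else None).
Definition eps (F : fieldType) n (l0 : nat) (a : posroot n) : F :=
  if rlo a == l0 then -1 else 1.
Definition inR n l0 h1 (v : posroot n) := (l0 <= rlo v)%N && (rhi v <= h1)%N.
Definition goodr n l0 h1 (a : posroot n) := (rlo a == l0) || (rhi a == h1).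

Lemma eact_fvarR (F : fieldType) n l0 h1 (a v : posroot n) :
  goodr l0 h1 a -> inR l0 h1 v ->
  eact a (fvar F v) = eps F l0 a *: oF F (dd l0 h1 a v).
Proof.
move=> ga /andP[hl hh]; rewrite eact_fvar ef_actE /eps /dd.
case ea: (rlo a == l0).
  rewrite (@mkr_None n (rlo v) (rlo a)); last by rewrite (eqP ea).
  rewrite /= if_same sub0r scaleN1r (eqP ea).
  by case: (rlo v == l0).
move: ga; rewrite /goodr ea /= => /eqP ha.
rewrite ha (@mkr_None n h1 (rhi v)) //= if_same subr0 scale1r eq_sym.
by case: (rhi v == h1).
Qed.

Definition mono (F : fieldType) n (T : seq (posroot n)) : Sn F n :=
  \prod_(v <- T) fvar F v.

Fixpoint step n (d : posroot n -> option (posroot n)) (T : seq (posroot n))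
  : seq (seq (posroot n)) :=
  match T with
  | [::] => [::]
  | v :: T' => (if d v is Some u then [:: u :: T'] else [::])
                 ++ map (cons v) (step d T')
  end.

Lemma dd_inR n l0 h1 (a v u : posroot n) : goodr l0 h1 a -> inR l0 h1 v ->
  dd l0 h1 a v = Some u -> inR l0 h1 u.
Proof.
move=> ga /andP[hl hh]; rewrite /dd /inR; case: ifP => [/eqP ea|ea].
  case: ifP => // _ /mkr_Some[-> ->]; rewrite hh andbT.
  by rewrite -ea ltnW // root_lt.
move: ga; rewrite /goodr ea /= => /eqP ha.
case: ifP => // _ /mkr_Some[-> ->]; by rewrite hl /= -ha ltnW // root_lt.
Qed.

Lemma eact_mono (F : fieldType) n l0 h1 (a : posroot n) T :
  goodr l0 h1 a -> all (inR l0 h1) T ->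
  eact a (mono F T) = eps F l0 a *: \sum_(T' <- step (dd l0 h1 a) T) mono F T'.
Proof.
move=> ga; elim: T => [|v T IH] /=.
  by move=> _; rewrite /mono big_nil eact1 big_nil scaler0.
case/andP=> hv hT.
rewrite /mono big_cons eactM -/(mono F T) IH // (eact_fvarR _ ga hv).
rewrite big_cat /= big_map.
under [X in _ = _ *: (_ + X)]eq_bigr do rewrite /mono big_cons -/(mono F _).
rewrite -mulr_sumr scalerDr scalerAr; congr (_ + _).
case: (dd l0 h1 a v) => [u|] /=.
  by rewrite big_seq1 /mono big_cons scalerAl.
by rewrite big_nil scaler0 mul0r.
Qed.


Definition termsL n l0 h1 (w : seq (posroot n)) (Ts : seq (seq (posroot n))) :=
  foldr (fun a Ts => flatten (map (step (dd l0 h1 a)) Ts)) Ts w.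

Lemma step_spec n (d : posroot n -> option (posroot n)) T T' :
  T' \in step d T ->
  exists P v Q u, [/\ T = P ++ v :: Q, T' = P ++ u :: Q & d v = Some u].
Proof.
elim: T T' => [|v T IH] T' //=.
rewrite mem_cat => /orP[|].
  case E: (d v) => [u|] //; rewrite inE => /eqP ->.
  by exists [::], v, T, u.
case/mapP => T'' /IH [P [v' [Q [u [-> -> e]]]]] ->.
by exists (v :: P), v', Q, u.
Qed.

Lemma mem_step n (d : posroot n -> option (posroot n)) P Q v u :
  d v = Some u -> P ++ u :: Q \in step d (P ++ v :: Q).
Proof.
move=> e; elim: P => [|x P IH] /=; first by rewrite e mem_cat inE eqxx.
by rewrite mem_cat; apply/orP; right; apply/map_f.
Qed.

Lemma mem_flat_step n (d : posroot n -> option (posroot n)) Ts T T' :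
  T \in Ts -> T' \in step d T -> T' \in flatten (map (step d) Ts).
Proof. by move=> h1 h2; apply/flattenP; exists (step d T) => //; apply: map_f. Qed.

Lemma flat_step_spec n (d : posroot n -> option (posroot n)) Ts T' :
  T' \in flatten (map (step d) Ts) -> exists2 T, T \in Ts & T' \in step d T.
Proof. by case/flattenP => s /mapP[T hT ->] hs; exists T. Qed.

Lemma termsL_inR n l0 h1 (w : seq (posroot n)) Ts :
  all (goodr l0 h1) w -> (forall T, T \in Ts -> all (inR l0 h1) T) ->
  forall T, T \in termsL l0 h1 w Ts -> all (inR l0 h1) T.
Proof.
move=> hw hTs; elim: w hw => [|a w IH] /=; first by move=> _; exact: hTs.
case/andP=> ga hw T /flat_step_spec[T1 /(IH hw) hT1 /step_spec[P [v [Q [u [e1 e2 e3]]]]]].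
move: hT1; rewrite e1 e2 !all_cat /= => /and3P[-> hv ->] /=.
by rewrite (dd_inR ga hv e3).
Qed.

Lemma wact_terms (F : fieldType) n l0 h1 (w : seq (posroot n)) Ts :
  all (goodr l0 h1) w -> (forall T, T \in Ts -> all (inR l0 h1) T) ->
  wact w (\sum_(T <- Ts) mono F T)
  = (\prod_(a <- w) eps F l0 a) *: \sum_(T <- termsL l0 h1 w Ts) mono F T.
Proof.
move=> hw hTs; elim: w hw => [|a w IH] /=; first by rewrite big_nil scale1r.
case/andP=> ga hw; rewrite IH // eactZ eact_sum big_cons mulrC -scalerA.
congr (_ *: _); rewrite big_flatten big_map /= scaler_sumr.
rewrite big_seq [RHS]big_seq; apply: eq_bigr => T hT.
by rewrite (eact_mono _ ga (termsL_inR hw hTs hT)).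
Qed.

Definition loAdd n l0 (w : seq (posroot n)) := [seq rhi a | a <- w & rlo a == l0].
Definition hiAdd n l0 (w : seq (posroot n)) := [seq rlo a | a <- w & rlo a != l0].

Lemma termsL_perm n l0 h1 (w : seq (posroot n)) T0 T :
  T \in termsL l0 h1 w [:: T0] ->
  perm_eq (map (@rlo n) T ++ nseq (size (loAdd l0 w)) l0) (loAdd l0 w ++ map (@rlo n) T0)
  /\ perm_eq (map (@rhi n) T ++ nseq (size (hiAdd l0 w)) h1) (hiAdd l0 w ++ map (@rhi n) T0).
Proof.
elim: w T => [|a w IH] T /=.
  by rewrite inE => /eqP ->; rewrite !cats0.
case/flat_step_spec => T1 /IH [IHl IHh] /step_spec[P [v [Q [u [e1 e2 e3]]]]].
move: e3; rewrite /dd /loAdd /hiAdd /=; case ea: (rlo a == l0) => /=.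
  case: ifP => // /eqP ev /mkr_Some[eu1 eu2].
  move: IHl IHh; rewrite /loAdd /hiAdd e1 e2 !map_cat /= ev eu1 eu2 => IHl IHh.
  split => //.
  move/permP: IHl => IHl; apply/permP => p; move: (IHl p).
  rewrite !count_cat /= !count_nseq /= !count_cat; lia.
case: ifP => // /eqP ev /mkr_Some[eu1 eu2].
move: IHl IHh; rewrite /loAdd /hiAdd e1 e2 !map_cat /= ev eu1 eu2 => IHl IHh.
split => //.
move/permP: IHh => IHh; apply/permP => p; move: (IHh p).
rewrite !count_cat /= !count_nseq /= !count_cat; lia.
Qed.


Definition lep (x y : nat * nat) := (x.1 <= y.1)%N && (x.2 <= y.2)%N.
Definition wp (X : seq (nat * nat)) := (\sum_(x <- X) x.1 * x.2)%N.

Lemma key_ineq (X Y l h : nat) : (X < l)%N -> (Y < h)%N -> (X*h + l*Y < X*Y + l*h)%N.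
Proof.
move=> hl hh.
rewrite -(subnKC (ltnW hl)) -(subnKC (ltnW hh)).
set d1 := (l - X)%N. set d2 := (h - Y)%N.
have p1 : (0 < d1)%N by rewrite subn_gt0.
have p2 : (0 < d2)%N by rewrite subn_gt0.
rewrite !mulnDl !mulnDr.
have : (0 < d1 * d2)%N by rewrite muln_gt0 p1.
lia.
Qed.

Lemma perm_swap2 (T : eqType) (a b : T) s : perm_eq (a :: b :: s) (b :: a :: s).
Proof. by apply/permP => p /=; rewrite addnCA. Qed.

Lemma rearr (S : seq (nat * nat)) : pairwise lep S -> forall T,
  perm_eq (unzip1 T) (unzip1 S) -> perm_eq (unzip2 T) (unzip2 S) ->
  (wp T < wp S)%N || perm_eq T S.
Proof.
elim: S => [|[X Y] S IH] /=.
  move=> _ T /perm_size; rewrite size_map; case: T => // _ _.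
  by rewrite perm_refl orbT.
case/andP => hall hS T h1 h2.
case: (boolP ((X, Y) \in T)) => hin.
  have pT := perm_to_rem hin.
  set R := rem (X, Y) T in pT.
  have h1' : perm_eq (unzip1 R) (unzip1 S).
    by rewrite -(perm_cons X); apply: perm_trans h1; rewrite perm_sym; exact: perm_map _ pT.
  have h2' : perm_eq (unzip2 R) (unzip2 S).
    by rewrite -(perm_cons Y); apply: perm_trans h2; rewrite perm_sym; exact: perm_map _ pT.
  have wT : wp T = (X * Y + wp R)%N by rewrite /wp (perm_big _ pT) big_cons.
  case/orP: (IH hS R h1' h2') => [lt|pR].
    by rewrite wT /wp big_cons /= -/(wp S) ltn_add2l lt.
  by rewrite (perm_trans pT) ?orbT // perm_cons.
apply/orP; left.
have hX : X \in unzip1 T by rewrite (perm_mem h1) inE eqxx.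
have hY : Y \in unzip2 T by rewrite (perm_mem h2) inE eqxx.
case/mapP: hX => [[x h'] hx1 /= ex]; subst x.
case/mapP: hY => [[l' y] hx2 /= ey]; subst y.
have ne : (l', Y) != (X, h').
  apply/negP => /eqP [e1 e2]; subst; by rewrite hx1 in hin.
have p1 := perm_to_rem hx1.
have hx2' : (l', Y) \in rem (X, h') T by move: hx2; rewrite (perm_mem p1) inE (negbTE ne).
have p2 := perm_to_rem hx2'.
set T0 := rem (l', Y) (rem (X, h') T) in p2.
have pT : perm_eq T ((X, h') :: (l', Y) :: T0) by apply: perm_trans p1 _; rewrite perm_cons.
have hl' : l' \in X :: unzip1 S.
  by rewrite -(perm_mem h1) (perm_mem (perm_map _ pT)) !inE eqxx orbT.
have hh' : h' \in Y :: unzip2 S.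
  by rewrite -(perm_mem h2) (perm_mem (perm_map _ pT)) !inE eqxx.
have Xl : (X < l')%N.
  rewrite ltn_neqAle; apply/andP; split.
    by apply/negP => /eqP e; subst; rewrite hx2 in hin.
  move: hl'; rewrite inE => /orP[/eqP -> //|/mapP[[z1 z2] hz /= ->]].
  by move/allP: hall => /(_ _ hz) /andP[].
have Yh : (Y < h')%N.
  rewrite ltn_neqAle; apply/andP; split.
    by apply/negP => /eqP e; subst; rewrite hx1 in hin.
  move: hh'; rewrite inE => /orP[/eqP -> //|/mapP[[z1 z2] hz /= ->]].
  by move/allP: hall => /(_ _ hz) /andP[].
set T1 := (l', h') :: T0.
have h1' : perm_eq (unzip1 T1) (unzip1 S).
  rewrite -(perm_cons X); apply: perm_trans h1.
  by rewrite perm_sym; apply: perm_trans (perm_map _ pT) _.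
have h2' : perm_eq (unzip2 T1) (unzip2 S).
  rewrite -(perm_cons Y); apply: perm_trans h2.
  rewrite perm_sym; apply: perm_trans (perm_map _ pT) _; exact: perm_swap2.
have le1 : (wp T1 <= wp S)%N.
  case/orP: (IH hS T1 h1' h2') => [/ltnW //|pp].
  by rewrite /wp (perm_big _ pp).
have wT : wp T = (X * h' + (l' * Y + wp T0))%N by rewrite /wp (perm_big _ pT) !big_cons.
have wT1 : wp T1 = (l' * h' + wp T0)%N by rewrite /wp big_cons.
have -> : wp ((X, Y) :: S) = (X * Y + wp S)%N by rewrite /wp big_cons.
rewrite wT.
have := @key_ineq X Y l' h' Xl Yh.
move: le1; rewrite wT1; move: (wp T0) (wp S) => a b.
move: (X * h')%N (l' * Y)%N (X * Y)%N (l' * h')%N => c1 c2 c3 c4.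
clear; lia.
Qed.


Definition pr n (v : posroot n) : nat * nat := (rlo v, rhi v).
Definition wsum n (T : seq (posroot n)) := (\sum_(v <- T) rlo v * rhi v)%N.
Definition lep_r n (x y : posroot n) := (rlo x <= rlo y)%N && (rhi x <= rhi y)%N.

Lemma pr_inj n : injective (@pr n).
Proof. by move=> x y [e1 e2]; apply: root_eq. Qed.

Lemma rearr_root n (S T : seq (posroot n)) : pairwise (@lep_r n) S ->
  perm_eq (map (@rlo n) T) (map (@rlo n) S) -> perm_eq (map (@rhi n) T) (map (@rhi n) S) ->
  (wsum T < wsum S)%N || perm_eq T S.
Proof.
move=> hS h1 h2.
have := @rearr (map (@pr n) S) _ (map (@pr n) T).
rewrite pairwise_map /unzip1 /unzip2 -!map_comp /wp !big_map.
move=> /(_ hS h1 h2) /orP[-> //|/perm_map_inj ->]; last exact: pr_inj.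
by rewrite orbT.
Qed.

Definition oseq T (o : option T) := if o is Some x then [:: x] else [::].
Definition ops n l0 h1 (v : posroot n) :=
  oseq (mkr n l0 (rlo v)) ++ oseq (mkr n (rhi v) h1).
Definition word n l0 h1 (S : seq (posroot n)) := flatten (map (ops l0 h1) S).

Lemma word_good n l0 h1 (S : seq (posroot n)) : all (goodr l0 h1) (word l0 h1 S).
Proof.
apply/allP => a /flattenP[s /mapP[v _ ->]]; rewrite mem_cat /goodr.
case/orP; rewrite /oseq.
  by case E: mkr => [b|] //; rewrite inE => /eqP ->; have [-> _] := mkr_Some E; rewrite eqxx.
by case E: mkr => [b|] //; rewrite inE => /eqP ->; have [_ ->] := mkr_Some E; rewrite eqxx orbT.
Qed.

Lemma termsL_cat n l0 h1 (w1 w2 : seq (posroot n)) Ts :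
  termsL l0 h1 (w1 ++ w2) Ts = termsL l0 h1 w1 (termsL l0 h1 w2 Ts).
Proof. by rewrite /termsL foldr_cat. Qed.

Lemma nseqS_cat T k (c : T) (S : seq T) : nseq k.+1 c ++ S = nseq k c ++ c :: S.
Proof. by elim: k => //= k ->. Qed.

Lemma mem_word n (c : posroot n) (S : seq (posroot n)) :
  all (inR (rlo c) (rhi c)) S -> forall k,
  nseq k c ++ S \in termsL (rlo c) (rhi c) (word (rlo c) (rhi c) S)
                         [:: nseq (k + size S) c].
Proof.
set l0 := rlo c; set h1 := rhi c.
elim: S => [|q S IH] /=.
  by move=> _ k; rewrite cats0 addn0 mem_seq1.
case/andP=> /andP[hql hqh] hS k.
rewrite /word /= -/(word l0 h1 S) /ops termsL_cat termsL_cat.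
have := IH hS k.+1; rewrite nseqS_cat addSnnS => hIH.
set Ts := termsL l0 h1 (word l0 h1 S) _ in hIH.
have hlq : (l0 < rhi q)%N by apply: leq_trans (root_lt q).
have [c' [hc'1 hc'2 hc']] : exists c' : posroot n, [/\ rlo c' = l0, rhi c' = rhi q &
    nseq k c ++ c' :: S \in termsL l0 h1 (oseq (mkr n (rhi q) h1)) Ts].
  case EB: (mkr n (rhi q) h1) => [b|] /=.
    have [eb1 eb2] := mkr_Some EB.
    have [c' ec'] := mkr_ex hlq (root_hi q).
    have [ec1 ec2] := mkr_Some ec'.
    exists c'; split => //.
    apply: (mem_flat_step hIH); apply: mem_step.
    by rewrite /dd eb1 (gtn_eqF hlq) /= eqxx.
  exists c; split => //.
  apply/eqP; rewrite eqn_leq hqh andbT leqNgt; apply/negP => lt.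
  by have [u] := mkr_ex lt (root_hi c); rewrite EB.
case EA: (mkr n l0 (rlo q)) => [a|] /=.
  have [ea1 ea2] := mkr_Some EA.
  apply: (mem_flat_step hc'); apply: mem_step.
  by rewrite /dd ea1 eqxx hc'1 eqxx ea2 hc'2 mkr_self.
suff e : q = c' by move: hc'; rewrite -e.
apply: root_eq => //; rewrite hc'1.
apply/eqP; rewrite eq_sym eqn_leq hql /= leqNgt; apply/negP => lt.
by have [u] := mkr_ex lt (ltn_trans (root_lt q) (root_hi q)); rewrite EA.
Qed.


Lemma loAdd_cat n l0 (w1 w2 : seq (posroot n)) :
  loAdd l0 (w1 ++ w2) = loAdd l0 w1 ++ loAdd l0 w2.
Proof. by rewrite /loAdd filter_cat map_cat. Qed.
Lemma hiAdd_cat n l0 (w1 w2 : seq (posroot n)) :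
  hiAdd l0 (w1 ++ w2) = hiAdd l0 w1 ++ hiAdd l0 w2.
Proof. by rewrite /hiAdd filter_cat map_cat. Qed.

Lemma word_perm n l0 h1 (S : seq (posroot n)) : (h1 < n)%N -> all (inR l0 h1) S ->
  perm_eq (map (@rlo n) S ++ nseq (size (loAdd l0 (word l0 h1 S))) l0)
          (loAdd l0 (word l0 h1 S) ++ nseq (size S) l0) /\
  perm_eq (map (@rhi n) S ++ nseq (size (hiAdd l0 (word l0 h1 S))) h1)
          (hiAdd l0 (word l0 h1 S) ++ nseq (size S) h1).
Proof.
move=> hh1; elim: S => [|q S IH] /=; first by rewrite /word /= /loAdd /hiAdd /=.
case/andP=> /andP[hql hqh] /IH [IHl IHh].
rewrite /word /= -/(word l0 h1 S) loAdd_cat hiAdd_cat /ops !loAdd_cat !hiAdd_cat.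
have hlq : (l0 < rhi q)%N by apply: leq_trans (root_lt q).
split.
  move/permP: IHl => IHl; apply/permP => p; move: (IHl p).
  case EA: (mkr n l0 (rlo q)) => [a|] /=;
  case EB: (mkr n (rhi q) h1) => [b|] /=.
  - have [ea1 ea2] := mkr_Some EA; have [eb1 eb2] := mkr_Some EB.
    rewrite /loAdd /= ea1 eqxx eb1 (gtn_eqF hlq) /=.
    rewrite !count_cat /= !count_nseq /= ?ea2 ?eb1; lia.
  - have [ea1 ea2] := mkr_Some EA.
    rewrite /loAdd /= ea1 eqxx ?ea2.
    rewrite !count_cat /= !count_nseq /= ?ea2 ?eb1; lia.
  - have [eb1 eb2] := mkr_Some EB.
    have eq : rlo q = l0.
      apply/eqP; rewrite eq_sym eqn_leq hql /= leqNgt; apply/negP => lt.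
      by have [u] := mkr_ex lt (ltn_trans (root_lt q) (root_hi q)); rewrite EA.
    rewrite /loAdd /= eb1 (gtn_eqF hlq) /= eq.
    rewrite !count_cat /= !count_nseq /= ?ea2 ?eb1; lia.
  - have eq : rlo q = l0.
      apply/eqP; rewrite eq_sym eqn_leq hql /= leqNgt; apply/negP => lt.
      by have [u] := mkr_ex lt (ltn_trans (root_lt q) (root_hi q)); rewrite EA.
    rewrite /loAdd /= eq.
    rewrite !count_cat /= !count_nseq /= ?ea2 ?eb1; lia.
move/permP: IHh => IHh; apply/permP => p; move: (IHh p).
case EA: (mkr n l0 (rlo q)) => [a|] /=;
case EB: (mkr n (rhi q) h1) => [b|] /=.
- have [ea1 ea2] := mkr_Some EA; have [eb1 eb2] := mkr_Some EB.
  rewrite /hiAdd /= ea1 eqxx eb1 (gtn_eqF hlq) /=.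
  rewrite !count_cat /= !count_nseq /= ?ea2 ?eb1; lia.
- have [ea1 ea2] := mkr_Some EA.
  have eq : rhi q = h1.
    apply/eqP; rewrite eqn_leq hqh /= leqNgt; apply/negP => lt.
    by have [u] := mkr_ex lt hh1; rewrite EB.
  rewrite /hiAdd /= ea1 eqxx /= eq.
  rewrite !count_cat /= !count_nseq /= ?ea2 ?eb1; lia.
- have [eb1 eb2] := mkr_Some EB.
  rewrite /hiAdd /= eb1 (gtn_eqF hlq) /=.
  rewrite !count_cat /= !count_nseq /= ?ea2 ?eb1; lia.
- have eq : rhi q = h1.
    apply/eqP; rewrite eqn_leq hqh /= leqNgt; apply/negP => lt.
    by have [u] := mkr_ex lt hh1; rewrite EB.
  rewrite /hiAdd /= eq.
  rewrite !count_cat /= !count_nseq /= ?ea2 ?eb1; lia.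
Qed.


Lemma mono_nseq (F : fieldType) n (c : posroot n) k : mono F (nseq k c) = fvar F c ^+ k.
Proof.
elim: k => [|k IH]; first by rewrite /mono big_nil expr0.
by rewrite /mono /= big_cons -/(mono F _) IH exprS.
Qed.

Lemma terms_perm n (c : posroot n) S T : all (inR (rlo c) (rhi c)) S ->
  T \in termsL (rlo c) (rhi c) (word (rlo c) (rhi c) S) [:: nseq (size S) c] ->
  perm_eq (map (@rlo n) T) (map (@rlo n) S) /\ perm_eq (map (@rhi n) T) (map (@rhi n) S).
Proof.
move=> hS hT; have [pl ph] := termsL_perm hT; have [ql qh] := word_perm (root_hi c) hS.
rewrite !map_nseq in pl ph; split.
  rewrite -(perm_cat2r (nseq (size (loAdd (rlo c) (word (rlo c) (rhi c) S))) (rlo c))).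
  by apply: perm_trans pl _; rewrite perm_sym.
rewrite -(perm_cat2r (nseq (size (hiAdd (rlo c) (word (rlo c) (rhi c) S))) (rhi c))).
by apply: perm_trans ph _; rewrite perm_sym.
Qed.

Lemma prod_eps_neq0 (F : fieldType) n l0 (w : seq (posroot n)) :
  \prod_(a <- w) eps F l0 a != 0.
Proof.
elim: w => [|a w IH]; first by rewrite big_nil oner_neq0.
rewrite big_cons mulf_neq0 // /eps; case: ifP => _; by rewrite ?oppr_eq0 oner_neq0.
Qed.

Lemma key (F : fieldType) (hF : [pchar F] =i pred0) n (c : posroot n)
  (S : seq (posroot n)) :
  all (inR (rlo c) (rhi c)) S -> pairwise (@lep_r n) S ->
  exists w (kap eps0 : F) (L : seq (seq (posroot n))),
   [/\ kap != 0,
       wact w (fvar F c ^+ size S) = kap *: mono F S + eps0 *: \sum_(T <- L) mono F T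
     & forall T, T \in L -> (wsum T < wsum S)%N].
Proof.
move=> hS hpw.
set l0 := rlo c; set h1 := rhi c.
set w := word l0 h1 S.
set Ts := termsL l0 h1 w [:: nseq (size S) c].
set E := \prod_(a <- w) eps F l0 a.
have hc : all (inR l0 h1) (nseq (size S) c).
  by apply/allP => x; rewrite mem_nseq => /andP[_ /eqP ->]; rewrite /inR !leqnn.
have eqW : wact w (fvar F c ^+ size S) = E *: \sum_(T <- Ts) mono F T.
  rewrite -mono_nseq.
  have -> : mono F (nseq (size S) c) = \sum_(T <- [:: nseq (size S) c]) mono F T.
    by rewrite big_seq1.
  apply: wact_terms; first exact: word_good.
  by move=> T; rewrite inE => /eqP ->.
set cnt := count (fun T => perm_eq T S) Ts.
exists w, (E * cnt%:R), E, [seq T <- Ts | ~~ perm_eq T S].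
split.
- rewrite mulf_neq0 ?prod_eps_neq0 //.
  rewrite ((pcharf0P F).1 hF) -lt0n /cnt -has_count.
  apply/hasP; exists S => //.
  by have := mem_word hS 0; rewrite add0n.
- rewrite eqW (bigID (fun T => perm_eq T S)) /= scalerDr big_filter; congr (_ + _).
  rewrite (eq_bigr (fun _ => mono F S)) => [|T pT]; last by rewrite /mono (perm_big _ pT).
  by rewrite big_const_seq iter_addr_0 -scaler_nat scalerA.
- move=> T; rewrite mem_filter => /andP[np hT].
  have [h1' h2'] := terms_perm hS hT.
  by case/orP: (rearr_root hpw h1' h2') => // p; rewrite p in np.
Qed.


Lemma lep_r_trans n : transitive (@lep_r n).
Proof.
move=> y x z /andP[h1 h2] /andP[h3 h4]; apply/andP; split;
  [exact: leq_trans h1 h3 | exact: leq_trans h2 h4].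
Qed.

Lemma lep_r_refl n : reflexive (@lep_r n).
Proof. by move=> x; rewrite /lep_r !leqnn. Qed.

Lemma dyck_lep n (x y : posroot n) : dyck_step x y -> lep_r x y.
Proof.
by rewrite /dyck_step /lep_r => /orP[/andP[/eqP -> /eqP ->]|/andP[/eqP -> /eqP ->]];
  rewrite ?leqnn ?leqnSn.
Qed.

Definition ltr n (x y : posroot n) := (rlo x + rhi x < rlo y + rhi y)%N.

Lemma dyck_ltr n (x y : posroot n) : dyck_step x y -> ltr x y.
Proof.
rewrite /dyck_step /ltr => /orP[/andP[/eqP -> /eqP ->]|/andP[/eqP -> /eqP ->]].
  by rewrite addSn ltnS leqnn.
by rewrite addnS ltnS leqnn.
Qed.

Lemma path_bounds n (b : posroot n) p : path (@lep_r n) b p ->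
  forall x, x \in b :: p -> lep_r b x && lep_r x (last b p).
Proof.
elim: p b => [|y p IH] b /=.
  by move=> _ x; rewrite inE => /eqP ->; rewrite lep_r_refl.
case/andP=> hby hp x; rewrite inE => /orP[/eqP ->|hx].
  rewrite lep_r_refl /=; have := IH y hp y; rewrite inE eqxx => /(_ isT) /andP[_ h].
  exact: lep_r_trans hby h.
have /andP[h1 h2] := IH y hp x hx; rewrite h2 andbT.
exact: lep_r_trans hby h1.
Qed.

Lemma pairwise_flat_nseq n (X : seq (posroot n)) (f : posroot n -> nat) :
  pairwise (@lep_r n) X -> pairwise (@lep_r n) (flatten [seq nseq (f x) x | x <- X]).
Proof.
elim: X => [|x X IH] //= /andP[hx hX].
rewrite pairwise_cat IH // andbT; apply/andP; split.
  apply/allrelP => y z; rewrite mem_nseq => /andP[_ /eqP ->].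
  case/flattenP => s /mapP[x' hx' ->]; rewrite mem_nseq => /andP[_ /eqP ->].
  by move/allP: hx => /(_ _ hx').
elim: (f x) => [|k IHk] //=; rewrite IHk andbT.
by apply/allP => y; rewrite mem_nseq => /andP[_ /eqP ->]; rewrite lep_r_refl.
Qed.

Lemma count_flat_nseq n (X : seq (posroot n)) (f : posroot n -> nat) v :
  uniq X -> (count_mem v (flatten [seq nseq (f x) x | x <- X]) <= f v)%N.
Proof.
elim: X => [|x X IH] //= /andP[hx hX]; rewrite count_cat count_nseq.
case: (eqVneq x v) => [e|ne].
  subst x; rewrite /= eqxx mul1n.
  suff -> : count_mem v (flatten [seq nseq (f x0) x0 | x0 <- X]) = 0%N by rewrite addn0.
  apply/count_memPn; apply/negP => /flattenP[s /mapP[y hy ->]].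
  by rewrite mem_nseq => /andP[_ /eqP e]; subst y; rewrite hy in hx.
by rewrite /= (negbTE ne) mul0n add0n IH.
Qed.


Definition mT n (T : seq (posroot n)) : 'X_{1..nroots n} :=
  (\sum_(v <- T) U_(ridx v))%MM.

Lemma mono_X (F : fieldType) n (T : seq (posroot n)) : mono F T = 'X_[mT T].
Proof. by rewrite /mono /mT -mprodXE. Qed.

Definition Wm n (m : 'X_{1..nroots n}) : nat :=
  (\sum_(i < nroots n) m i * (rlo (enum_val i) * rhi (enum_val i)))%N.

Lemma Wm_add n (m1 m2 : 'X_{1..nroots n}) : Wm (m1 + m2)%MM = (Wm m1 + Wm m2)%N.
Proof. by rewrite /Wm -big_split; apply: eq_bigr => i _; rewrite mnmDE mulnDl. Qed.

Lemma Wm0 n : Wm (0%MM : 'X_{1..nroots n}) = 0%N.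
Proof. by rewrite /Wm big1 // => i _; rewrite mnm0E. Qed.

Lemma Wm_U n (v : posroot n) : Wm (U_(ridx v))%MM = (rlo v * rhi v)%N.
Proof.
rewrite /Wm (bigD1 (ridx v)) //= mnm1E eqxx mul1n /ridx enum_rankK big1 ?addn0 //.
by move=> i hi; rewrite mnm1E eq_sym (negbTE hi).
Qed.

Lemma Wm_mT n (T : seq (posroot n)) : Wm (mT T) = wsum T.
Proof.
rewrite /mT /wsum; elim: T => [|v T IH]; first by rewrite !big_nil Wm0.
by rewrite !big_cons Wm_add Wm_U IH.
Qed.

Lemma mT_count n (T : seq (posroot n)) i : mT T i = count_mem (enum_val i) T.
Proof.
rewrite /mT mnm_sumE; elim: T => [|v T IH]; first by rewrite big_nil.
rewrite big_cons IH /= mnm1E; congr (_ + _)%N.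
case: (eqVneq v (enum_val i)) => [->|ne]; first by rewrite /ridx enum_valK eqxx.
case: eqP => // e; move: ne; by rewrite -e /ridx enum_rankK eqxx.
Qed.

Lemma fmon_X (F : fieldType) n (m : 'X_{1..nroots n}) :
  fmon F [ffun v => m (ridx v)] = 'X_[m].
Proof.
rewrite mpolyXE_id /fmon (reindex (@ridx n)) /=; last first.
  by apply: onW_bij; apply: enum_rank_bij.
by apply: eq_bigr => v _; rewrite ffunE.
Qed.

Lemma Ia0 (F : fieldType) n (a : posroot n -> nat) : in_Ia a (0 : Sn F n).
Proof. by exists [::]; rewrite big_nil. Qed.

Lemma IaD (F : fieldType) n (a : posroot n -> nat) (P Q : Sn F n) :
  in_Ia a P -> in_Ia a Q -> in_Ia a (P + Q).
Proof. by move=> [l1 ->] [l2 ->]; exists (l1 ++ l2); rewrite big_cat. Qed.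

Lemma IaZ (F : fieldType) n (a : posroot n -> nat) k (P : Sn F n) :
  in_Ia a P -> in_Ia a (k *: P).
Proof.
move=> [l ->]; exists [seq (k *: x.1.1, x.1.2, x.2) | x <- l].
rewrite big_map scaler_sumr; apply: eq_bigr => x _ /=; by rewrite scalerAl.
Qed.

Definition Pgood (F : fieldType) n (a : posroot n -> nat) (Q : Sn F n) :=
  exists l : seq ({ffun posroot n -> nat} * F),
    (forall x, x \in l -> in_Sa a x.1) /\
    in_Ia a (Q - \sum_(x <- l) x.2 *: fmon F x.1).

Lemma Pgood_Ia (F : fieldType) n (a : posroot n -> nat) (Q : Sn F n) :
  in_Ia a Q -> Pgood a Q.
Proof. by move=> h; exists [::]; split => //; rewrite big_nil subr0. Qed.

Lemma Pgood_add (F : fieldType) n (a : posroot n -> nat) (P Q : Sn F n) :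
  Pgood a P -> Pgood a Q -> Pgood a (P + Q).
Proof.
move=> [l1 [h1 i1]] [l2 [h2 i2]]; exists (l1 ++ l2); split.
  by move=> x; rewrite mem_cat => /orP[/h1|/h2].
by rewrite big_cat opprD addrACA; apply: IaD.
Qed.

Lemma Pgood_scale (F : fieldType) n (a : posroot n -> nat) k (P : Sn F n) :
  Pgood a P -> Pgood a (k *: P).
Proof.
move=> [l [h i]]; exists [seq (x.1, k * x.2) | x <- l]; split.
  by move=> x /mapP[y hy ->] /=; apply: h.
rewrite big_map /=.
under eq_bigr do rewrite -scalerA.
by rewrite -scaler_sumr -scalerBr; apply: IaZ.
Qed.

Lemma Pgood_sum (F : fieldType) n (a : posroot n -> nat) (I : eqType) (r : seq I) (G : I -> Sn F n) :
  (forall i, i \in r -> Pgood a (G i)) -> Pgood a (\sum_(i <- r) G i).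
Proof.
elim: r => [|i r IH] h; first by rewrite big_nil; apply: Pgood_Ia; apply: Ia0.
rewrite big_cons; apply: Pgood_add; first by apply: h; rewrite inE eqxx.
by apply: IH => j hj; apply: h; rewrite inE hj orbT.
Qed.


Lemma base_rootE n (b c : posroot n) p :
  base_root b p = Some c -> rlo c = rlo b /\ rhi c = rhi (last b p).
Proof. by rewrite /base_root; case: pickP => // x /andP[/eqP h1 /eqP h2] [<-]. Qed.

Lemma main_mono (F : fieldType) (hF : [pchar F] =i pred0) n (a : posroot n -> nat) :
  forall B (m : 'X_{1..nroots n}), (Wm m < B)%N -> Pgood a ('X_[m] : Sn F n).
Proof.
elim => // B IH m hm.
set t := [ffun v => m (ridx v)].
have ft : fmon F t = 'X_[m] := fmon_X F m.
case: (classic (in_Sa a t)) => hin.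
  exists [:: (t, 1)]; split; first by move=> x; rewrite inE => /eqP ->.
  by rewrite big_seq1 /= scale1r ft subrr; apply: Ia0.
have [b [p [c [hd hb hlt]]]] : exists b p c, [/\ dyck_path (b :: p),
    base_root b p = Some c & (a c < \sum_(x <- b :: p) t x)%N].
  apply: NNPP => H; apply: hin => b p c hd hb; rewrite leqNgt; apply/negP => lt.
  by apply: H; exists b, p, c.
have [ec1 ec2] := base_rootE hb.
have hpath : path (@lep_r n) b p := sub_path (@dyck_lep n) (hd : path (@dyck_step n) b p).
have huniq : uniq (b :: p).
  apply: (@sorted_uniq _ (@ltr n)).
  - by move=> y x z; rewrite /ltr; apply: ltn_trans.
  - by move=> x; rewrite /ltr ltnn.
  - exact: (sub_path (@dyck_ltr n) (hd : path (@dyck_step n) b p)).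
set L0 := flatten [seq nseq (t x) x | x <- b :: p].
set S := take (a c).+1 L0.
have hsz : size S = (a c).+1.
  apply: size_takel; rewrite /L0 size_flatten /shape -map_comp.
  have -> : sumn [seq (size \o (fun x => nseq (t x) x)) i | i <- b :: p]
            = (\sum_(x <- b :: p) t x)%N.
    by rewrite sumnE big_map; apply: eq_bigr => x _; rewrite /= size_nseq.
  exact: hlt.
have hSR : all (inR (rlo c) (rhi c)) S.
  apply/allP => x /mem_take /flattenP[s /mapP[y hy ->]].
  rewrite mem_nseq => /andP[_ /eqP ->].
  have /andP[/andP[h1 _] /andP[_ h2]] := path_bounds hpath hy.
  by rewrite /inR ec1 ec2 h1 h2.
have hSpw : pairwise (@lep_r n) S.
  apply: subseq_pairwise (take_subseq _ _) _; apply: pairwise_flat_nseq.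
  by rewrite -sorted_pairwise //; exact: lep_r_trans.
have hle : (mT S <= m)%MM.
  apply/mnm_lepP => i; rewrite mT_count.
  have := count_flat_nseq t (enum_val i) huniq.
  rewrite ffunE /ridx enum_valK => h; apply: leq_trans h.
  by rewrite /S -[X in (_ <= count_mem _ X)%N](cat_take_drop (a c).+1) count_cat leq_addr.
have [w [kap [eps0 [L [hk eqw hL]]]]] := key hF hSR hSpw.
rewrite hsz in eqw.
set m' := (m - mT S)%MM.
have eX : 'X_[m] = 'X_[m'] * mono F S by rewrite mono_X -mpolyXD submK.
have eQ : 'X_[m] = kap^-1 *: ('X_[m'] * wact w (fvar F c ^+ (a c).+1))
               + (- (kap^-1 * eps0)) *: \sum_(T <- L) 'X_[m' + mT T] :> Sn F n.
  have e1 : \sum_(T <- L) 'X_[m' + mT T] = 'X_[m'] * \sum_(T <- L) mono F T :> Sn F n.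
    by rewrite mulr_sumr; apply: eq_bigr => T _; rewrite mpolyXD mono_X.
  rewrite e1 eqw mulrDr -!scalerAr scalerDr !scalerA mulVf // scale1r -eX scaleNr addrK.
  by [].
rewrite eQ; apply: Pgood_add.
  apply: Pgood_Ia; exists [:: (kap^-1 *: 'X_[m'], w, c)].
  by rewrite big_seq1 /= scalerAl.
apply: Pgood_scale; apply: Pgood_sum => T hT; apply: IH.
have := hL T hT.
have hWm : Wm m = (Wm m' + wsum S)%N by rewrite -Wm_mT -Wm_add submK.
rewrite Wm_add Wm_mT; move: hm; rewrite hWm; lia.
Qed.

Unset Implicit Arguments.

Theorem lemma4p1 (F : fieldType) (hF : [pchar F] =i pred0) (n : nat)
    (a : posroot n -> nat) (P : Sn F n) :
  exists l : seq ({ffun posroot n -> nat} * F),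
    (forall x, x \in l -> in_Sa a x.1) /\
    in_Ia a (P - \sum_(x <- l) x.2 *: fmon F x.1).
Proof.
have : Pgood a P.
  rewrite [P]mpolyE; apply: Pgood_sum => m _; apply: Pgood_scale.
  exact: (main_mono hF a (ltnSn _)).
by [].
Qed.
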